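(* Let $2\leq m\leq n\leq p$ be integers. The $m\times n\times p$ chessboard has a bi-sited closed knight tour if and only if all of the following hold: (a) at least one of $m,n,p$ is even; (b) $n\geq 3$; (c) $p\geq 4$.
   Context: The $m\times n\times p$ board is $\mathcal{B}=\{1,\dots,m\}\times\{1,\dots,n\}\times\{1,\dots,p\}$. Knight moves $\mathcal{C}_3$ are vectors in $\mathbb{Z}^3$ with exactly one coordinate in $\{\pm1\}$, exactly one in $\{\pm2\}$ and the remaining one $0$; cells are adjacent iff their difference is in $\mathcal{C}_3$; a closed knight tour is a Hamiltonian cycle. Let $e_1,e_2,e_3$ be the standard basis. For $c\in\mathcal{C}_3$ let $e_{[c,1]}$ (resp. $e_{[c,2]}$) be the basis vector of the coordinate where $c$ has entry $\pm1$ (resp. $\pm2$), and $\tilde c=-\langle c,e_{[c,1]}\rangle e_{[c,1]}+\langle c,e_{[c,2]}\rangle e_{[c,2]}$. For a Hamiltonian cycle $(a^i)_{i\in I}$, $I=\{1,\dots,N\}$, indices mod $N$, a \emph{site} given by edges $\{a^n,a^{n+1}\}$, $\{a^m,a^{m+1}\}$ is one of the following, for some $c\in\mathcal{C}_3$ and some $i$: (wopp) $a^{n+1}=a^n+c$, $a^m=a^{m+1}+c$, $a^m-a^{n+1}=a^{m+1}-a^n\in\{\pm2e_i\}$; (nwopp) $a^{n+1}=a^n+c$, $a^{m+1}=a^m+c$, $a^m-a^n=a^{m+1}-a^{n+1}\in\{\pm2e_i\}$; (wocp) $a^{n+1}=a^n+c$, $a^{m+1}=a^m+\tilde c$, $a^m-a^n=\langle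 c,e_{[c,1]}\rangle e_{[c,1]}$; (nwocp) $a^{n+1}=a^n+c$, $a^m=a^{m+1}+\tilde c$, $a^{m+1}-a^n=\langle c,e_{[c,1]}\rangle e_{[c,1]}$. Its support is $\{a^n,a^{n+1},a^m,a^{m+1}\}$. A closed tour is \emph{bi-sited} if it contains two sites with disjoint supports. *)

(* Defs.v *)
From mathcomp Require Import all_boot all_order all_algebra.
Set Implicit Arguments. Unset Strict Implicit. Unset Printing Implicit Defensive.
Import Order.TTheory GRing.Theory Num.Theory.
Local Open Scope ring_scope.

Definition vec := (int * int * int)%type.
Definition vx (v : vec) : int := v.1.1.
Definition vy (v : vec) : int := v.1.2.
Definition vz (v : vec) : int := v.2.
Definition vadd (u v : vec) : vec := (vx u + vx v, vy u + vy v, vz u + vz v).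
Definition vsub (u v : vec) : vec := (vx u - vx v, vy u - vy v, vz u - vz v).
Definition vzero : vec := (0, 0, 0).

(* standard basis e_1, e_2, e_3 (indexed 0,1,2) *)
Definition ebasis (i : 'I_3) : vec :=
  match val i with 0%N => (1, 0, 0) | 1%N => (0, 1, 0) | _ => (0, 0, 1) end.
Definition vscale (k : int) (v : vec) : vec := (k * vx v, k * vy v, k * vz v).

Definition on_board (m n p : nat) (x : vec) : Prop :=
  [/\ 1 <= vx x <= m%:Z, 1 <= vy x <= n%:Z & 1 <= vz x <= p%:Z].

Definition knight_move (c : vec) : Prop :=
  perm_eq [:: absz (vx c); absz (vy c); absz (vz c)] [:: 0%N; 1%N; 2%N].

(* <c, e_[c,1]> e_[c,1] : keep the coordinate of c that is +-1 *)
Definition part1 (c : vec) : vec :=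
  (if absz (vx c) == 1%N then vx c else 0,
   if absz (vy c) == 1%N then vy c else 0,
   if absz (vz c) == 1%N then vz c else 0).

(* c~ = - <c,e_[c,1]> e_[c,1] + <c,e_[c,2]> e_[c,2] (for a knight move c) *)
Definition ctilde (c : vec) : vec :=
  (if absz (vx c) == 1%N then - vx c else vx c,
   if absz (vy c) == 1%N then - vy c else vy c,
   if absz (vz c) == 1%N then - vz c else vz c).

Definition pm2e (v : vec) : Prop :=
  exists i : 'I_3, v = vscale 2 (ebasis i) \/ v = vscale (-2) (ebasis i).

(* cyclic indexing of a tour: a^i, indices mod N = size s (0-based) *)
Definition at_ (s : seq vec) (i : nat) : vec := nth vzero s (i %% size s).

Definition closed_tour (m n p : nat) (s : seq vec) : Prop :=
  [/\ uniq s,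
      (forall x, x \in s <-> on_board m n p x) &
      (forall i, (i < size s)%N -> knight_move (vsub (at_ s i.+1) (at_ s i)))].

Definition site (s : seq vec) (k l : nat) : Prop :=
  let a := at_ s in
  (k < size s)%N /\ (l < size s)%N /\
  exists c : vec, knight_move c /\
   [\/
       [/\ a k.+1 = vadd (a k) c, a l = vadd (a l.+1) c,
           vsub (a l) (a k.+1) = vsub (a l.+1) (a k) & pm2e (vsub (a l) (a k.+1))],
       [/\ a k.+1 = vadd (a k) c, a l.+1 = vadd (a l) c,
           vsub (a l) (a k) = vsub (a l.+1) (a k.+1) & pm2e (vsub (a l) (a k))],
       [/\ a k.+1 = vadd (a k) c, a l.+1 = vadd (a l) (ctilde c)
         & vsub (a l) (a k) = part1 c]
     |
       [/\ a k.+1 = vadd (a k) c, a l = vadd (a l.+1) (ctilde c)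
         & vsub (a l.+1) (a k) = part1 c]].

Definition site_support (s : seq vec) (k l : nat) : seq vec :=
  [:: at_ s k; at_ s k.+1; at_ s l; at_ s l.+1].

Definition bisited (s : seq vec) : Prop :=
  exists k1 l1 k2 l2, site s k1 l1 /\ site s k2 l2 /\
    (forall x, x \in site_support s k1 l1 -> x \notin site_support s k2 l2).

(* Main.v *)
Require Import Defs.
From mathcomp Require Import all_boot all_order all_algebra.
From mathcomp Require Import zify.
Set Implicit Arguments. Unset Strict Implicit. Unset Printing Implicit Defensive.
Import Order.TTheory GRing.Theory Num.Theory.
Local Open Scope ring_scope.

Definition kmb (c : vec) : bool :=
  perm_eq [:: absz (vx c); absz (vy c); absz (vz c)] [:: 0%N; 1%N; 2%N].

Definition T (B : vec -> Prop) (s : seq vec) : Prop :=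
  [/\ uniq s, forall x, x \in s <-> B x
    & forall x, x \in s -> kmb (vsub (next s x) x)].

Definition E (s : seq vec) (u v : vec) : bool := (u \in s) && (next s u == v).

Lemma next_catE (x : vec) t y r z : uniq ((x :: t) ++ (y :: r)) ->
  (z \in x :: t -> next ((x :: t) ++ (y :: r)) z =
     if z == last x t then y else next (x :: t) z).
Proof.
move=> U zin.
have Ut : uniq (x :: t) by move: U; rewrite cat_uniq => /and3P[].
rewrite !next_nth mem_cat zin index_cat zin orTb.
have ilt : (index z (x :: t) < size (x :: t))%N by rewrite index_mem.
have lastE : last x t = nth x (x :: t) (size t).
  by rewrite -[in RHS]/((size (x::t)).-1) nth_last.
have zl : (z == last x t) = (index z (x :: t) == size t).
  apply/eqP/eqP => [->|h].
    by rewrite lastE index_uniq.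
  by rewrite -(nth_index x zin) h lastE.
rewrite zl; set i := index z (x :: t); rewrite -/i in ilt *; rewrite [in LHS]/=.
case: eqP => [->|ne].
  by rewrite nth_cat ltnn subnn.
rewrite nth_cat; have -> // : (index z (x :: t) < size t)%N.
by move: ilt; rewrite /= ltnS leq_eqVlt => /orP[/eqP //|].
Qed.

Lemma next_catE2 (x : vec) t y r z : uniq ((x :: t) ++ (y :: r)) ->
  (z \in y :: r -> next ((x :: t) ++ (y :: r)) z =
     if z == last y r then x else next (y :: r) z).
Proof.
move=> U zin.
rewrite -(next_rot (size (x :: t)) U) rot_size_cat.
by apply: next_catE => //; rewrite uniq_catC.
Qed.

Lemma last_of_next (x : vec) t a : uniq (x :: t) -> a \in x :: t ->
  next (x :: t) a = x -> a = last x t.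
Proof.
move=> U ain h.
have lastE : last x t = nth x (x :: t) (size t).
  by rewrite -[in RHS]/((size (x::t)).-1) nth_last.
have h2 : next (x :: t) (last x t) = x.
  rewrite next_nth mem_last.
  rewrite [in index _ _]lastE index_uniq //=.
  by rewrite nth_default.
by rewrite -(prev_next U a) -(prev_next U (last x t)) h h2.
Qed.

Lemma tmerge B1 B2 s1 s2 a b a' b' :
  T B1 s1 -> T B2 s2 -> (forall x, B1 x -> B2 x -> False) ->
  E s1 a b -> E s2 b' a' -> kmb (vsub a' a) -> kmb (vsub b b') ->
  exists s, [/\ T (fun x => B1 x \/ B2 x) s,
     forall u v, E s1 u v -> u != a -> E s u v &
     forall u v, E s2 u v -> u != b' -> E s u v].
Proof.
move=> [U1 M1 K1] [U2 M2 K2] D /andP[ain /eqP ab] /andP[b'in /eqP b'a'] k1 k2.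
have bin : b \in s1 by rewrite -ab mem_next.
have a'in : a' \in s2 by rewrite -b'a' mem_next.
case: (rot_to bin) => i t1 r1E.
case: (rot_to a'in) => j t2 r2E.
have Ur1 : uniq (b :: t1) by rewrite -r1E rot_uniq.
have Ur2 : uniq (a' :: t2) by rewrite -r2E rot_uniq.
have N1 : forall z, next (b :: t1) z = next s1 z by move=> z; rewrite -r1E next_rot.
have N2 : forall z, next (a' :: t2) z = next s2 z by move=> z; rewrite -r2E next_rot.
have R1 : forall z, (z \in b :: t1) = (z \in s1) by move=> z; rewrite -r1E mem_rot.
have R2 : forall z, (z \in a' :: t2) = (z \in s2) by move=> z; rewrite -r2E mem_rot.
have La : a = last b t1 by apply: last_of_next => //; rewrite ?R1 // N1.
have Lb : b' = last a' t2 by apply: last_of_next => //; rewrite ?R2 // N2.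
have U : uniq ((b :: t1) ++ (a' :: t2)).
  rewrite cat_uniq Ur1 Ur2 andbT andTb; apply/hasPn => z.
  rewrite R2 R1 => /M2 h2; apply/negP => /M1 h1; exact: D h1 h2.
exists ((b :: t1) ++ (a' :: t2)); split.
- split => // [x|x].
    rewrite mem_cat R1 R2; split => [/orP[/M1|/M2]|[/M1->|/M2->]]; by [left|right|rewrite ?orbT].
  rewrite mem_cat => /orP[] xin.
    rewrite (next_catE U xin) -La; case: eqP => [->//|_].
    by rewrite N1; apply: K1; rewrite -R1.
  rewrite (next_catE2 U xin) -Lb; case: eqP => [->//|_].
  by rewrite N2; apply: K2; rewrite -R2.
- move=> u v /andP[uin /eqP uv] ua.
  have uin' : u \in b :: t1 by rewrite R1.
  rewrite /E mem_cat uin' orTb (next_catE U uin') -La (negbTE ua) N1 uv eqxx.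
  done.
- move=> u v /andP[uin /eqP uv] ub.
  have uin' : u \in a' :: t2 by rewrite R2.
  rewrite /E mem_cat uin' orbT andTb (next_catE2 U uin') -Lb (negbTE ub) N2 uv eqxx.
  done.
Qed.

Ltac veq := apply/eqP; rewrite ?/vadd ?/vsub ?/vx ?/vy ?/vz /= !xpair_eqE /=; lia.
Ltac vneq := rewrite ?/vadd ?/vsub ?/vx ?/vy ?/vz /= !xpair_eqE /=; lia.

Lemma vaddK (t x : vec) : vsub (vadd t x) t = x.
Proof. case: t x => [[a b] c] [[d e] f]; veq. Qed.
Lemma vsubK (t x : vec) : vadd t (vsub x t) = x.
Proof. case: t x => [[a b] c] [[d e] f]; veq. Qed.
Lemma vadd_inj t : injective (vadd t).
Proof. by move=> x y h; rewrite -(vaddK t x) h vaddK. Qed.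
Lemma vsub_tr (t x y : vec) : vsub (vadd t x) (vadd t y) = vsub x y.
Proof. case: t x y => [[a b] c] [[d e] f] [[g h] i]; veq. Qed.

Lemma T_trans B s t : T B s -> T (fun x => B (vsub x t)) (map (vadd t) s).
Proof.
move=> [U M K]; split.
- by rewrite map_inj_uniq //; apply: vadd_inj.
- by move=> x; rewrite -{1}(vsubK t x) (mem_map (@vadd_inj t)).
- move=> x /mapP[y yin ->]; rewrite (next_map (@vadd_inj t) U) vsub_tr.
  exact: K.
Qed.

Lemma E_trans s t u v : uniq s -> E s u v -> E (map (vadd t) s) (vadd t u) (vadd t v).
Proof.
move=> U /andP[uin /eqP uv]; rewrite /E (mem_map (@vadd_inj t)) uin.
by rewrite (next_map (@vadd_inj t) U) uv eqxx.
Qed.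

Lemma T_ext (B B' : vec -> Prop) s : (forall x, B x <-> B' x) -> T B s -> T B' s.
Proof. by move=> h [U M K]; split => // x; rewrite M. Qed.

Lemma ob_z m n p q x :
  on_board m n (p + q) x <-> on_board m n p x \/ on_board m n q (vsub x (0, 0, p%:Z)).
Proof.
case: x => [[a b] c]; rewrite /on_board /vsub /vx /vy /vz /=; split.
  move=> [h1 h2 h3]; case: (boolP (c <= p%:Z)) => hc; [left|right]; split; lia.
by case=> -[h1 h2 h3]; split; lia.
Qed.
Lemma ob_z_disj m n p q x :
  on_board m n p x -> on_board m n q (vsub x (0, 0, p%:Z)) -> False.
Proof. case: x => [[a b] c]; rewrite /on_board /vsub /vx /vy /vz /= => -[? ? ?] [? ? ?]; lia. Qed.

Lemma ob_y m n n' p x :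
  on_board m (n + n') p x <-> on_board m n p x \/ on_board m n' p (vsub x (0, n%:Z, 0)).
Proof.
case: x => [[a b] c]; rewrite /on_board /vsub /vx /vy /vz /=; split.
  move=> [h1 h2 h3]; case: (boolP (b <= n%:Z)) => hc; [left|right]; split; lia.
by case=> -[h1 h2 h3]; split; lia.
Qed.
Lemma ob_y_disj m n n' p x :
  on_board m n p x -> on_board m n' p (vsub x (0, n%:Z, 0)) -> False.
Proof. case: x => [[a b] c]; rewrite /on_board /vsub /vx /vy /vz /= => -[? ? ?] [? ? ?]; lia. Qed.

Lemma ob_x m m' n p x :
  on_board (m + m') n p x <-> on_board m n p x \/ on_board m' n p (vsub x (m%:Z, 0, 0)).
Proof.
case: x => [[a b] c]; rewrite /on_board /vsub /vx /vy /vz /=; split.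
  move=> [h1 h2 h3]; case: (boolP (a <= m%:Z)) => hc; [left|right]; split; lia.
by case=> -[h1 h2 h3]; split; lia.
Qed.
Lemma ob_x_disj m m' n p x :
  on_board m n p x -> on_board m' n p (vsub x (m%:Z, 0, 0)) -> False.
Proof. case: x => [[a b] c]; rewrite /on_board /vsub /vx /vy /vz /= => -[? ? ?] [? ? ?]; lia. Qed.

Definition HXt (m n p : nat) : vec := (Posz m, 1, 2).
Definition HXh (m n p : nat) : vec := (Posz m - 1, 3, 2).
Definition LXt (m n p : nat) : vec := (1, 3, 1).
Definition LXh (m n p : nat) : vec := (2, 1, 1).
Definition HYt (m n p : nat) : vec := (2, Posz n, Posz p - 2).
Definition HYh (m n p : nat) : vec := (2, Posz n - 1, Posz p).
Definition LYt (m n p : nat) : vec := (2, 1, Posz p - 1).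
Definition LYh (m n p : nat) : vec := (2, 2, Posz p - 3).
Definition HZt (m n p : nat) : vec := (Posz m - 1, 1, Posz p).
Definition HZh (m n p : nat) : vec := (Posz m - 1, 3, Posz p - 1).
Definition LZt (m n p : nat) : vec := (Posz m, 3, 1).
Definition LZh (m n p : nat) : vec := (Posz m, 1, 2).

Definition highs m n p : seq vec := [:: HXt m n p; HYt m n p; HZt m n p].

Definition pm2eb (v : vec) : bool :=
  v \in [:: (2, 0, 0); (-2, 0, 0); (0, 2, 0); (0, -2, 0); (0, 0, 2); (0, 0, -2)].

Definition siteb (u1 v1 u2 v2 : vec) : bool :=
  let c := vsub v1 u1 in
  kmb c && [|| [&& u2 == vadd v2 c, vsub u2 v1 == vsub v2 u1 & pm2eb (vsub u2 v1)],
              [&& v2 == vadd u2 c, vsub u2 u1 == vsub v2 v1 & pm2eb (vsub u2 u1)],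
              (v2 == vadd u2 (ctilde c)) && (vsub u2 u1 == part1 c) |
              (u2 == vadd v2 (ctilde c)) && (vsub v2 u1 == part1 c)].

Definition sitesok (s sv : seq vec) : bool :=
  match sv with
  | [:: u1; v1; u2; v2; u3; v3; u4; v4] =>
     [&& E s u1 v1, E s u2 v2, E s u3 v3, E s u4 v4,
         siteb u1 v1 u2 v2, siteb u3 v3 u4 v4 &
         all (fun x => x \notin [:: u3; v3; u4; v4]) [:: u1; v1; u2; v2]]
  | _ => false
  end.

Definition stails (sv : seq vec) : seq vec :=
  match sv with
  | [:: u1; _; u2; _; u3; _; u4; _] => [:: u1; u2; u3; u4]
  | _ => [::]
  end.

Record Inv (m n p : nat) (s : seq vec) : Prop := MkInv {
  iT : T (on_board m n p) s;
  ihx : E s (HXt m n p) (HXh m n p);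
  ilx : E s (LXt m n p) (LXh m n p);
  ihy : E s (HYt m n p) (HYh m n p);
  ily : E s (LYt m n p) (LYh m n p);
  ihz : E s (HZt m n p) (HZh m n p);
  ilz : E s (LZt m n p) (LZh m n p);
  isite : exists sv, sitesok s sv && all (fun x => x \notin highs m n p) (stails sv) }.

Definition Good m n p := exists s, Inv m n p s.

Lemma sitesok_tails s sv : sitesok s sv -> all (fun x => x \in s) (stails sv).
Proof.
case: sv => [|u1 [|v1 [|u2 [|v2 [|u3 [|v3 [|u4 [|v4 [|]]]]]]]]] //=.
by case/and5P => /andP[-> _] /andP[-> _] /andP[-> _] /andP[-> _].
Qed.

Lemma sitesok_keep s s' a sv : (forall u v, E s u v -> u != a -> E s' u v) ->
  a \notin stails sv -> sitesok s sv -> sitesok s' sv.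
Proof.
move=> R.
case: sv => [|u1 [|v1 [|u2 [|v2 [|u3 [|v3 [|u4 [|v4 [|]]]]]]]]] //=.
rewrite !inE !negb_or => /and4P[n1 n2 n3 n4].
case/and5P => e1 e2 e3 e4 /and3P[-> -> ->].
by rewrite (R _ _ e1) 1?eq_sym // (R _ _ e2) 1?eq_sym // (R _ _ e3) 1?eq_sym // (R _ _ e4) 1?eq_sym.
Qed.

Lemma tails_update s sv (B : vec -> Prop) (hs hs' : seq vec) :
  (forall x, x \in s -> B x) -> (forall x, B x -> x \notin hs -> x \notin hs') ->
  sitesok s sv -> all (fun x => x \notin hs) (stails sv) ->
  all (fun x => x \notin hs') (stails sv).
Proof.
move=> HB Hu /sitesok_tails /allP A /allP N; apply/allP => x xin.
by apply: Hu (N x xin); apply: HB; apply: A.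
Qed.

Ltac cln := repeat match goal with H : ?A |- _ => lazymatch A with is_true (_ <= _)%N => fail | _ => clear H end end.
Ltac veq' := apply/eqP; rewrite ?/vadd ?/vsub ?/vx ?/vy ?/vz /= ?xpair_eqE /=; cln; lia.
Ltac vneq' := rewrite ?/vadd ?/vsub ?/vx ?/vy ?/vz /= ?xpair_eqE /=; cln; lia.
Ltac fu := rewrite ?/HXt ?/HXh ?/LXt ?/LXh ?/HYt ?/HYh ?/LYt ?/LYh ?/HZt ?/HZh ?/LZt ?/LZh.

Lemma glue_z m n p q s1 s2 : (2 <= m)%N -> (3 <= n)%N -> (4 <= p)%N -> (4 <= q)%N ->
  Inv m n p s1 -> Inv m n q s2 -> Good m n (p + q).
Proof.
move=> hm hn hp hq [T1 hx1 lx1 hy1 ly1 hz1 lz1 st1] [T2 hx2 lx2 hy2 ly2 hz2 lz2 st2].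
pose t : vec := (0, 0, p%:Z).
have T2' := T_trans t T2.
have U2 : uniq s2 by case: T2.
have k1 : kmb (vsub (vadd t (LZh m n q)) (HZt m n p)).
  have -> : vsub (vadd t (LZh m n q)) (HZt m n p) = (1, 0, 2) by fu; veq'.
  by [].
have k2 : kmb (vsub (HZh m n p) (vadd t (LZt m n q))).
  have -> : vsub (HZh m n p) (vadd t (LZt m n q)) = (-1, 0, -2) by fu; veq'.
  by [].
have [s [Ts R1 R2]] := tmerge T1 T2' (@ob_z_disj m n p q) hz1 (E_trans t U2 lz2) k1 k2.
- exists s; constructor.
  + by apply: T_ext Ts => x; rewrite ob_z.
  + by apply: R1 hx1 _; fu; vneq'.
  + by apply: R1 lx1 _; fu; vneq'.
  + have -> : HYt m n (p + q) = vadd t (HYt m n q) by fu; veq'.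
    have -> : HYh m n (p + q) = vadd t (HYh m n q) by fu; veq'.
    by apply: R2 (E_trans t U2 hy2) _; fu; vneq'.
  + have -> : LYt m n (p + q) = vadd t (LYt m n q) by fu; veq'.
    have -> : LYh m n (p + q) = vadd t (LYh m n q) by fu; veq'.
    by apply: R2 (E_trans t U2 ly2) _; fu; vneq'.
  + have -> : HZt m n (p + q) = vadd t (HZt m n q) by fu; veq'.
    have -> : HZh m n (p + q) = vadd t (HZh m n q) by fu; veq'.
    by apply: R2 (E_trans t U2 hz2) _; fu; vneq'.
  + by apply: R1 lz1 _; fu; vneq'.
  + case: st1 => sv /andP[ok tl]; exists sv; apply/andP; split.
      apply: sitesok_keep R1 _ ok.
      by apply/negP => /(allP tl); rewrite /highs !inE eqxx ?orbT.
    case: T1 => _ M1 _.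
    apply: tails_update (fun x h => iffLR (M1 x) h) _ ok tl => -[[a b] c].
    rewrite /on_board /highs /vx /vy /vz /= => -[h1 h2 h3]; move: h1 h2 h3; rewrite !inE; fu; vneq'.
Qed.

Lemma glue_y m n n' p s1 s2 : (2 <= m)%N -> (3 <= n)%N -> (3 <= n')%N -> (4 <= p)%N ->
  Inv m n p s1 -> Inv m n' p s2 -> Good m (n + n') p.
Proof.
move=> hm hn hn' hp [T1 hx1 lx1 hy1 ly1 hz1 lz1 st1] [T2 hx2 lx2 hy2 ly2 hz2 lz2 st2].
pose t : vec := (0, n%:Z, 0).
have T2' := T_trans t T2.
have U2 : uniq s2 by case: T2.
have k1 : kmb (vsub (vadd t (LYh m n' p)) (HYt m n p)).
  have -> : vsub (vadd t (LYh m n' p)) (HYt m n p) = (0, 2, -1) by fu; veq'.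
  by [].
have k2 : kmb (vsub (HYh m n p) (vadd t (LYt m n' p))).
  have -> : vsub (HYh m n p) (vadd t (LYt m n' p)) = (0, -2, 1) by fu; veq'.
  by [].
have [s [Ts R1 R2]] := tmerge T1 T2' (@ob_y_disj m n n' p) hy1 (E_trans t U2 ly2) k1 k2.
- exists s; constructor.
  + by apply: T_ext Ts => x; rewrite ob_y.
  + by apply: R1 hx1 _; fu; vneq'.
  + by apply: R1 lx1 _; fu; vneq'.
  + have -> : HYt m (n + n') p = vadd t (HYt m n' p) by fu; veq'.
    have -> : HYh m (n + n') p = vadd t (HYh m n' p) by fu; veq'.
    by apply: R2 (E_trans t U2 hy2) _; fu; vneq'.
  + by apply: R1 ly1 _; fu; vneq'.
  + by apply: R1 hz1 _; fu; vneq'.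
  + by apply: R1 lz1 _; fu; vneq'.
  + case: st1 => sv /andP[ok tl]; exists sv; apply/andP; split.
      apply: sitesok_keep R1 _ ok.
      by apply/negP => /(allP tl); rewrite /highs !inE eqxx ?orbT.
    case: T1 => _ M1 _.
    apply: tails_update (fun x h => iffLR (M1 x) h) _ ok tl => -[[a b] c].
    rewrite /on_board /highs /vx /vy /vz /= => -[h1 h2 h3]; move: h1 h2 h3; rewrite !inE; fu; vneq'.
Qed.

Lemma glue_x m m' n p s1 s2 : (2 <= m)%N -> (2 <= m')%N -> (3 <= n)%N -> (4 <= p)%N ->
  Inv m n p s1 -> Inv m' n p s2 -> Good (m + m') n p.
Proof.
move=> hm hm' hn hp [T1 hx1 lx1 hy1 ly1 hz1 lz1 st1] [T2 hx2 lx2 hy2 ly2 hz2 lz2 st2].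
pose t : vec := (m%:Z, 0, 0).
have T2' := T_trans t T2.
have U2 : uniq s2 by case: T2.
have k1 : kmb (vsub (vadd t (LXh m' n p)) (HXt m n p)).
  have -> : vsub (vadd t (LXh m' n p)) (HXt m n p) = (2, 0, -1) by fu; veq'.
  by [].
have k2 : kmb (vsub (HXh m n p) (vadd t (LXt m' n p))).
  have -> : vsub (HXh m n p) (vadd t (LXt m' n p)) = (-2, 0, 1) by fu; veq'.
  by [].
have [s [Ts R1 R2]] := tmerge T1 T2' (@ob_x_disj m m' n p) hx1 (E_trans t U2 lx2) k1 k2.
- exists s; constructor.
  + by apply: T_ext Ts => x; rewrite ob_x.
  + have -> : HXt (m + m') n p = vadd t (HXt m' n p) by fu; veq'.
    have -> : HXh (m + m') n p = vadd t (HXh m' n p) by fu; veq'.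
    by apply: R2 (E_trans t U2 hx2) _; fu; vneq'.
  + by apply: R1 lx1 _; fu; vneq'.
  + by apply: R1 hy1 _; fu; vneq'.
  + by apply: R1 ly1 _; fu; vneq'.
  + have -> : HZt (m + m') n p = vadd t (HZt m' n p) by fu; veq'.
    have -> : HZh (m + m') n p = vadd t (HZh m' n p) by fu; veq'.
    by apply: R2 (E_trans t U2 hz2) _; fu; vneq'.
  + have -> : LZt (m + m') n p = vadd t (LZt m' n p) by fu; veq'.
    have -> : LZh (m + m') n p = vadd t (LZh m' n p) by fu; veq'.
    by apply: R2 (E_trans t U2 lz2) _; fu; vneq'.
  + case: st1 => sv /andP[ok tl]; exists sv; apply/andP; split.
      apply: sitesok_keep R1 _ ok.
      by apply/negP => /(allP tl); rewrite /highs !inE eqxx ?orbT.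
    case: T1 => _ M1 _.
    apply: tails_update (fun x h => iffLR (M1 x) h) _ ok tl => -[[a b] c].
    rewrite /on_board /highs /vx /vy /vz /= => -[h1 h2 h3]; move: h1 h2 h3; rewrite !inE; fu; vneq'.
Qed.

Definition zs (k : nat) : seq int := [seq Posz i | i <- iota 1 k].
Definition board_seq (m n p : nat) : seq vec :=
  [seq (xy, z) | xy <- [seq (x, y) | x <- zs m, y <- zs n], z <- zs p].

Lemma mem_zs k (x : int) : (x \in zs k) = (1 <= x <= k%:Z).
Proof.
apply/mapP/idP => [[i]|/andP[h1 h2]].
  by rewrite mem_iota => /andP[h1 h2] ->; lia.
exists (absz x); last by lia.
rewrite mem_iota; lia.
Qed.

Lemma mem_board m n p x : (x \in board_seq m n p) <-> on_board m n p x.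
Proof.
case: x => [[a b] c]; rewrite /on_board /vx /vy /vz /=; split.
  case/allpairsP => -[xy z] /= [/allpairsP [[x y] /= [hx hy ->]] hz [-> -> ->]].
  by move: hx hy hz; rewrite !mem_zs.
move=> [h1 h2 h3]; apply/allpairsP; exists ((a, b), c) => /=; split => //.
by apply/allpairsP; exists (a, b); rewrite /= !mem_zs.
by rewrite mem_zs.
Qed.

Definition checkb m n p (s sv : seq vec) : bool :=
  [&& uniq s, perm_eq s (board_seq m n p), cycle (fun x y => kmb (vsub y x)) s,
      E s (HXt m n p) (HXh m n p), E s (LXt m n p) (LXh m n p),
      E s (HYt m n p) (HYh m n p), E s (LYt m n p) (LYh m n p),
      E s (HZt m n p) (HZh m n p), E s (LZt m n p) (LZh m n p),
      sitesok s sv & all (fun x => x \notin highs m n p) (stails sv)].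

Lemma checkb_Inv m n p s sv : checkb m n p s sv -> Inv m n p s.
Proof.
case/and5P => U P C h1 /and5P[h2 h3 h4 h5 /and3P[h6 h8 h9]].
constructor => //; last by exists sv; rewrite h8 h9.
split => // [x|x xin]; first by rewrite (perm_mem P) mem_board.
exact: (next_cycle C xin).
Qed.

Definition mtab : seq vec :=
  [:: (-2, -1, 0); (-2, 0, -1); (-2, 0, 1); (-2, 1, 0); (-1, -2, 0); (-1, 0, -2);
      (-1, 0, 2); (-1, 2, 0); (0, -2, -1); (0, -2, 1); (0, -1, -2); (0, -1, 2);
      (0, 1, -2); (0, 1, 2); (0, 2, -1); (0, 2, 1); (1, -2, 0); (1, 0, -2);
      (1, 0, 2); (1, 2, 0); (2, -1, 0); (2, 0, -1); (2, 0, 1); (2, 1, 0)].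

Fixpoint walk (x : vec) (ms : seq nat) : seq vec :=
  if ms is i :: ms' then let y := vadd x (nth vzero mtab i) in y :: walk y ms' else [::].
Definition tour (x : vec) (ms : seq nat) : seq vec := x :: walk x ms.

Lemma good_of m n p x ms (idx : seq nat) :
  checkb m n p (tour x ms) [seq nth vzero (tour x ms) i | i <- idx] -> Good m n p.
Proof. by move=> h; exists (tour x ms); apply: checkb_Inv h. Qed.

Lemma base_2_3_4 : Good 2 3 4.
Proof.
apply: (@good_of 2 3 4 (2, 1, 2) [:: 7; 8; 13; 12; 16; 15; 11; 5; 11; 14; 8; 13; 17; 13; 8; 12; 13; 9; 7; 8; 12; 18; 12] [:: 1; 2; 19; 20; 5; 6; 14; 15]).
vm_compute; reflexivity.
Qed.

Lemma base_2_3_5 : Good 2 3 5.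
Proof.
apply: (@good_of 2 3 5 (2, 1, 2) [:: 7; 11; 10; 14; 16; 15; 11; 5; 11; 15; 16; 12; 6; 10; 12; 13; 18; 4; 14; 16; 12; 13; 8; 12; 13; 11; 5; 10; 19] [:: 2; 3; 8; 9; 4; 5; 28; 29]).
vm_compute; reflexivity.
Qed.

Lemma base_2_3_6 : Good 2 3 6.
Proof.
apply: (@good_of 2 3 6 (2, 1, 2) [:: 7; 8; 13; 18; 12; 10; 11; 6; 15; 16; 14; 8; 12; 13; 11; 5; 10; 14; 16; 15; 11; 6; 10; 12; 13; 18; 4; 14; 16; 12; 5; 11; 13; 12; 17] [:: 1; 2; 17; 18; 3; 4; 30; 31]).
vm_compute; reflexivity.
Qed.

Lemma base_2_3_7 : Good 2 3 7.
Proof.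
apply: (@good_of 2 3 7 (2, 1, 2) [:: 7; 8; 13; 17; 11; 14; 4; 14; 16; 6; 12; 18; 6; 11; 14; 10; 18; 12; 10; 11; 14; 11; 6; 10; 18; 7; 17; 11; 10; 15; 4; 14; 18; 8; 12; 6; 12; 10; 11; 14; 17] [:: 1; 2; 7; 8; 3; 4; 11; 12]).
vm_compute; reflexivity.
Qed.

Lemma base_2_4_4 : Good 2 4 4.
Proof.
apply: (@good_of 2 4 4 (2, 1, 2) [:: 7; 8; 18; 12; 7; 18; 9; 7; 8; 12; 16; 6; 19; 9; 7; 17; 4; 13; 19; 5; 16; 14; 6; 8; 19; 11; 4; 14; 10; 18; 12] [:: 2; 3; 11; 12; 5; 6; 22; 23]).
vm_compute; reflexivity.
Qed.

Lemma base_2_4_5 : Good 2 4 5.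
Proof.
apply: (@good_of 2 4 5 (2, 1, 2) [:: 7; 8; 18; 6; 14; 17; 4; 18; 12; 13; 9; 7; 8; 12; 19; 8; 7; 18; 11; 5; 13; 8; 19; 5; 9; 18; 12; 5; 16; 6; 12; 19; 6; 18; 8; 7; 9; 17; 12] [:: 2; 3; 27; 28; 14; 15; 22; 23]).
vm_compute; reflexivity.
Qed.

Lemma base_2_4_6 : Good 2 4 6.
Proof.
apply: (@good_of 2 4 6 (2, 1, 2) [:: 7; 8; 18; 6; 15; 16; 14; 12; 5; 16; 15; 6; 18; 4; 14; 16; 5; 14; 16; 14; 4; 13; 9; 19; 11; 7; 8; 19; 8; 5; 15; 10; 16; 15; 4; 13; 19; 11; 5; 8; 19; 9; 6; 14; 16; 12; 12] [:: 1; 2; 39; 40; 6; 7; 41; 42]).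
vm_compute; reflexivity.
Qed.

Lemma base_2_4_7 : Good 2 4 7.
Proof.
apply: (@good_of 2 4 7 (2, 1, 2) [:: 7; 8; 18; 12; 7; 9; 19; 6; 18; 9; 7; 8; 10; 19; 10; 14; 4; 15; 9; 12; 16; 15; 4; 15; 13; 18; 4; 10; 18; 7; 8; 12; 14; 11; 17; 11; 14; 11; 5; 13; 16; 10; 15; 10; 11; 5; 13; 19; 11; 4; 14; 16; 12; 14; 10] [:: 2; 3; 45; 46; 4; 5; 16; 17]).
vm_compute; reflexivity.
Qed.

Lemma base_2_5_4 : Good 2 5 4.
Proof.
apply: (@good_of 2 5 4 (2, 1, 2) [:: 7; 14; 18; 10; 6; 9; 17; 11; 5; 14; 16; 6; 12; 18; 14; 6; 16; 5; 11; 14; 14; 18; 4; 12; 13; 16; 8; 12; 7; 13; 16; 14; 11; 10; 14; 11; 4; 10; 19] [:: 1; 2; 9; 10; 3; 4; 35; 36]).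
vm_compute; reflexivity.
Qed.

Lemma base_2_5_5 : Good 2 5 5.
Proof.
apply: (@good_of 2 5 5 (2, 1, 2) [:: 7; 8; 18; 6; 14; 15; 16; 8; 12; 6; 10; 19; 14; 6; 18; 8; 9; 5; 12; 19; 13; 11; 4; 14; 16; 14; 6; 16; 14; 5; 13; 17; 9; 15; 5; 9; 12; 16; 15; 4; 11; 15; 10; 12; 16; 13; 7; 12; 16] [:: 2; 3; 17; 18; 5; 6; 41; 42]).
vm_compute; reflexivity.
Qed.

Lemma base_2_5_6 : Good 2 5 6.
Proof.
apply: (@good_of 2 5 6 (2, 1, 2) [:: 7; 14; 18; 6; 9; 19; 5; 17; 11; 6; 16; 14; 4; 10; 18; 12; 5; 15; 16; 14; 6; 9; 11; 14; 15; 16; 14; 8; 12; 4; 11; 18; 12; 6; 14; 16; 10; 5; 13; 17; 7; 13; 17; 11; 11; 4; 14; 16; 14; 15; 11; 5; 12; 8; 16; 15; 4; 15; 17] [:: 1; 2; 53; 54; 3; 4; 42; 43]).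
vm_compute; reflexivity.
Qed.

Lemma base_2_5_7 : Good 2 5 7.
Proof.
apply: (@good_of 2 5 7 (2, 1, 2) [:: 7; 8; 18; 12; 7; 13; 17; 4; 16; 6; 12; 19; 9; 7; 9; 19; 13; 11; 4; 10; 18; 12; 12; 14; 6; 11; 16; 10; 5; 13; 11; 15; 12; 13; 16; 4; 14; 19; 10; 10; 7; 11; 13; 8; 16; 15; 15; 10; 6; 16; 5; 17; 14; 11; 13; 12; 9; 9; 12; 6; 12; 15; 17; 4; 9; 12; 15; 12; 16] [:: 2; 3; 9; 10; 4; 5; 11; 12]).
vm_compute; reflexivity.
Qed.

Lemma base_2_6_4 : Good 2 6 4.
Proof.
apply: (@good_of 2 6 4 (2, 1, 2) [:: 7; 8; 18; 12; 6; 15; 16; 5; 11; 14; 10; 11; 15; 16; 5; 13; 17; 13; 7; 12; 18; 10; 9; 7; 10; 19; 11; 5; 13; 8; 14; 16; 15; 11; 10; 15; 9; 8; 7; 15; 10; 8; 16; 15; 14; 11; 10] [:: 1; 2; 12; 13; 5; 6; 39; 40]).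
vm_compute; reflexivity.
Qed.

Lemma base_2_6_5 : Good 2 6 5.
Proof.
apply: (@good_of 2 6 5 (2, 1, 2) [:: 7; 8; 18; 6; 14; 16; 12; 6; 10; 14; 16; 6; 18; 14; 4; 12; 18; 12; 14; 6; 13; 16; 4; 14; 19; 5; 11; 17; 9; 6; 10; 17; 7; 19; 9; 13; 5; 13; 17; 8; 7; 18; 11; 10; 11; 7; 10; 16; 5; 15; 18; 9; 7; 19; 5; 10; 18; 4; 17] [:: 1; 2; 9; 10; 3; 4; 11; 12]).
vm_compute; reflexivity.
Qed.

Lemma base_2_6_6 : Good 2 6 6.
Proof.
apply: (@good_of 2 6 6 (2, 1, 2) [:: 7; 8; 18; 12; 7; 19; 6; 10; 18; 13; 9; 7; 17; 11; 4; 8; 12; 18; 7; 9; 10; 18; 12; 5; 19; 7; 11; 17; 11; 11; 4; 14; 16; 12; 5; 15; 14; 18; 11; 8; 11; 5; 17; 14; 15; 9; 12; 6; 13; 9; 19; 5; 11; 10; 9; 19; 5; 13; 16; 8; 5; 14; 16; 6; 19; 15; 4; 17; 7; 9; 17] [:: 1; 2; 61; 62; 3; 4; 33; 34]).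
vm_compute; reflexivity.
Qed.

Lemma base_2_6_7 : Good 2 6 7.
Proof.
apply: (@good_of 2 6 7 (2, 1, 2) [:: 7; 8; 18; 12; 7; 19; 6; 10; 18; 13; 11; 4; 16; 5; 13; 17; 5; 12; 16; 6; 12; 19; 7; 9; 19; 6; 10; 16; 4; 18; 12; 6; 11; 19; 7; 17; 13; 9; 7; 10; 8; 10; 15; 14; 16; 15; 10; 6; 16; 14; 11; 8; 11; 6; 14; 15; 12; 9; 16; 12; 15; 13; 8; 9; 5; 14; 19; 11; 8; 12; 6; 15; 10; 9; 18; 8; 12; 15; 6; 8; 10; 14; 17] [:: 2; 3; 19; 20; 4; 5; 21; 22]).
vm_compute; reflexivity.
Qed.

Lemma base_3_3_4 : Good 3 3 4.
Proof.
apply: (@good_of 3 3 4 (3, 1, 2) [:: 7; 11; 5; 13; 20; 5; 11; 14; 5; 16; 13; 17; 0; 13; 23; 5; 9; 6; 21; 15; 10; 11; 3; 10; 15; 21; 6; 8; 12; 18; 10; 3; 11; 14; 21] [:: 3; 4; 20; 21; 10; 11; 28; 29]).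
vm_compute; reflexivity.
Qed.

Lemma base_3_3_6 : Good 3 3 6.
Proof.
apply: (@good_of 3 3 6 (3, 1, 2) [:: 7; 4; 14; 16; 18; 12; 0; 19; 16; 3; 22; 3; 16; 19; 0; 18; 13; 4; 23; 3; 16; 14; 17; 11; 2; 20; 1; 12; 17; 11; 13; 12; 6; 22; 8; 1; 14; 22; 4; 7; 20; 5; 13; 11; 5; 20; 1; 18; 12; 6; 23; 10; 12] [:: 1; 2; 12; 13; 3; 4; 7; 8]).
vm_compute; reflexivity.
Qed.

Lemma base_3_4_4 : Good 3 4 4.
Proof.
apply: (@good_of 3 4 4 (3, 1, 2) [:: 7; 13; 16; 0; 17; 18; 3; 17; 11; 14; 12; 6; 21; 11; 8; 1; 14; 16; 6; 15; 23; 4; 7; 17; 11; 5; 20; 15; 4; 17; 2; 23; 3; 21; 11; 0; 10; 18; 12; 7; 18; 10; 6; 20; 10; 3; 23] [:: 2; 3; 21; 22; 7; 8; 23; 24]).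
vm_compute; reflexivity.
Qed.

Lemma base_3_4_5 : Good 3 4 5.
Proof.
apply: (@good_of 3 4 5 (3, 1, 2) [:: 7; 13; 9; 19; 1; 16; 15; 4; 20; 1; 17; 14; 4; 18; 17; 2; 18; 12; 18; 12; 3; 21; 4; 7; 18; 11; 4; 14; 10; 19; 18; 2; 10; 22; 12; 9; 13; 12; 8; 1; 19; 16; 6; 7; 9; 22; 12; 9; 1; 19; 6; 10; 12; 16; 18; 6; 14; 5; 21] [:: 2; 3; 6; 7; 4; 5; 31; 32]).
vm_compute; reflexivity.
Qed.

Lemma base_3_4_6 : Good 3 4 6.
Proof.
apply: (@good_of 3 4 6 (3, 1, 2) [:: 7; 4; 21; 7; 4; 23; 7; 4; 15; 21; 0; 16; 6; 18; 12; 14; 8; 7; 22; 4; 15; 18; 2; 17; 11; 16; 5; 6; 23; 7; 8; 10; 18; 3; 19; 9; 19; 1; 9; 23; 10; 3; 9; 15; 21; 12; 2; 8; 21; 13; 8; 7; 6; 20; 12; 3; 22; 4; 5; 23; 4; 18; 7; 4; 18; 14; 5; 20; 2; 12; 21] [:: 1; 2; 63; 64; 3; 4; 51; 52]).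
vm_compute; reflexivity.
Qed.

Lemma base_3_4_7 : Good 3 4 7.
Proof.
apply: (@good_of 3 4 7 (3, 1, 2) [:: 7; 4; 21; 7; 4; 18; 12; 19; 0; 16; 18; 12; 7; 4; 15; 20; 4; 15; 4; 14; 23; 1; 9; 19; 16; 11; 14; 3; 16; 15; 6; 22; 4; 7; 17; 11; 16; 5; 6; 21; 5; 12; 13; 11; 19; 8; 13; 4; 14; 5; 9; 13; 19; 10; 9; 12; 19; 6; 4; 10; 15; 22; 10; 1; 19; 18; 4; 18; 3; 8; 21; 14; 11; 1; 14; 11; 10; 15; 20; 12; 0; 20; 12] [:: 4; 5; 9; 10; 7; 8; 12; 13]).
vm_compute; reflexivity.
Qed.

Lemma base_3_5_4 : Good 3 5 4.
Proof.
apply: (@good_of 3 5 4 (3, 1, 2) [:: 7; 14; 11; 9; 10; 18; 1; 12; 20; 6; 12; 7; 23; 6; 5; 20; 9; 0; 18; 14; 12; 9; 6; 21; 15; 12; 6; 10; 11; 7; 21; 9; 8; 2; 14; 14; 11; 23; 1; 9; 10; 15; 21; 8; 13; 1; 8; 19; 15; 11; 8; 19; 1; 9; 22; 12; 1; 16; 19] [:: 1; 2; 48; 49; 3; 4; 21; 22]).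
vm_compute; reflexivity.
Qed.

Lemma base_3_5_6 : Good 3 5 6.
Proof.
apply: (@good_of 3 5 6 (3, 1, 2) [:: 7; 14; 6; 18; 17; 1; 21; 0; 16; 19; 3; 22; 6; 11; 4; 20; 1; 17; 5; 23; 3; 16; 6; 18; 12; 14; 4; 11; 18; 14; 16; 2; 19; 19; 1; 17; 10; 4; 20; 2; 18; 7; 12; 16; 19; 2; 18; 9; 7; 8; 22; 5; 10; 14; 13; 18; 8; 12; 9; 3; 18; 12; 14; 11; 13; 16; 1; 15; 21; 1; 20; 9; 12; 15; 11; 1; 10; 22; 3; 11; 17; 5; 20; 11; 3; 21; 13; 12; 10] [:: 1; 2; 53; 54; 3; 4; 35; 36]).
vm_compute; reflexivity.
Qed.

Lemma base_3_6_4 : Good 3 6 4.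
Proof.
apply: (@good_of 3 6 4 (3, 1, 2) [:: 7; 9; 12; 6; 10; 23; 11; 2; 23; 5; 11; 14; 8; 18; 1; 15; 10; 18; 17; 0; 21; 3; 18; 12; 15; 13; 4; 20; 0; 21; 7; 12; 13; 9; 19; 1; 17; 9; 19; 1; 16; 19; 0; 18; 9; 5; 22; 12; 13; 2; 8; 23; 1; 19; 11; 17; 3; 8; 13; 22; 10; 2; 15; 10; 21; 13; 9; 10; 1; 16; 19] [:: 1; 2; 12; 13; 3; 4; 22; 23]).
vm_compute; reflexivity.
Qed.

Lemma base_3_6_5 : Good 3 6 5.
Proof.
apply: (@good_of 3 6 5 (3, 1, 2) [:: 7; 14; 4; 16; 6; 18; 14; 16; 2; 23; 10; 1; 18; 12; 6; 23; 9; 1; 17; 13; 17; 1; 20; 6; 5; 23; 2; 23; 11; 2; 17; 12; 19; 3; 16; 19; 0; 9; 19; 13; 17; 0; 18; 9; 5; 19; 18; 3; 16; 19; 0; 8; 21; 15; 9; 12; 7; 11; 4; 14; 12; 16; 6; 8; 17; 19; 7; 4; 13; 16; 19; 0; 15; 9; 16; 19; 7; 17; 9; 8; 14; 6; 5; 19; 9; 7; 22; 10; 8] [:: 2; 3; 45; 46; 4; 5; 24; 25]).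
vm_compute; reflexivity.
Qed.

Lemma base_3_6_6 : Good 3 6 6.
Proof.
apply: (@good_of 3 6 6 (3, 1, 2) [:: 7; 14; 4; 16; 6; 18; 12; 17; 0; 19; 16; 3; 19; 7; 20; 2; 23; 8; 7; 18; 6; 10; 5; 23; 2; 20; 0; 19; 6; 18; 17; 1; 11; 23; 2; 20; 5; 6; 23; 5; 11; 4; 16; 14; 19; 3; 17; 8; 8; 7; 9; 15; 18; 9; 19; 5; 6; 12; 17; 18; 10; 4; 15; 13; 17; 11; 10; 4; 6; 22; 7; 4; 17; 5; 22; 13; 1; 20; 13; 12; 9; 3; 23; 1; 14; 16; 6; 22; 10; 1; 21; 15; 2; 16; 10; 7; 18; 17; 13; 6; 8; 7; 9; 10; 14; 20; 12] [:: 2; 3; 9; 10; 4; 5; 68; 69]).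
vm_compute; reflexivity.
Qed.

Lemma base_3_6_7 : Good 3 6 7.
Proof.
apply: (@good_of 3 6 7 (3, 1, 2) [:: 7; 14; 4; 16; 6; 12; 20; 2; 18; 18; 2; 23; 1; 15; 19; 17; 11; 3; 21; 9; 4; 10; 18; 1; 15; 16; 14; 7; 12; 18; 9; 19; 1; 16; 16; 2; 23; 14; 2; 16; 8; 12; 10; 18; 2; 17; 5; 23; 11; 2; 22; 3; 15; 16; 19; 8; 5; 12; 7; 23; 2; 18; 11; 16; 10; 5; 14; 15; 11; 9; 7; 9; 10; 23; 10; 3; 19; 11; 9; 5; 13; 23; 14; 10; 9; 2; 10; 15; 19; 6; 16; 10; 10; 15; 6; 12; 20; 13; 12; 1; 20; 9; 6; 14; 13; 11; 17; 1; 10; 21; 13; 3; 17; 18; 9; 2; 10; 12; 13; 20; 11; 7; 10; 16; 12] [:: 1; 2; 103; 104; 3; 4; 58; 59]).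
vm_compute; reflexivity.
Qed.


Local Close Scope ring_scope.

Create HintDb basedb.
#[local] Hint Resolve base_2_3_4 base_2_3_5 base_2_3_6 base_2_3_7 base_2_4_4 base_2_4_5 base_2_4_6 base_2_4_7 base_2_5_4 base_2_5_5 base_2_5_6 base_2_5_7 base_2_6_4 base_2_6_5 base_2_6_6 base_2_6_7 base_3_3_4 base_3_3_6 base_3_4_4 base_3_4_5 base_3_4_6 base_3_4_7 base_3_5_4 base_3_5_6 base_3_6_4 base_3_6_5 base_3_6_6 base_3_6_7 : basedb.

Lemma base_all x y z : (x == 2) || (x == 3) -> (3 <= y <= 6) -> (4 <= z <= 7) ->
  ~~ [&& odd x, odd y & odd z] -> Good x y z.
Proof.
move=> hx hy hz.
have : y \in [:: 3; 4; 5; 6] by rewrite !inE; lia.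
have : z \in [:: 4; 5; 6; 7] by rewrite !inE; lia.
rewrite !inE.
case/orP: hx => /eqP ->; case/or4P => /eqP ->; case/or4P => /eqP ->;
  first [by [] | by move=> _; auto with basedb].
Qed.

Lemma Lz x y z : (x == 2) || (x == 3) -> (3 <= y <= 6) -> 4 <= z ->
  ~~ [&& odd x, odd y & odd z] -> Good x y z.
Proof.
move=> hx hy; elim/ltn_ind: z => z IH hz hodd.
case: (leqP z 7) => hz7.
  by apply: base_all => //; rewrite hz hz7.
have h1 : Good x y (z - 4) by apply: IH; lia.
have h2 : Good x y 4 by apply: base_all => //; lia.
case: h1 => s1 i1; case: h2 => s2 i2.
have := glue_z _ _ _ _ i1 i2; rewrite subnK; last by lia.
by apply; lia.
Qed.

Lemma Ly x y z : (x == 2) || (x == 3) -> 3 <= y -> 4 <= z ->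
  ~~ [&& odd x, odd y & odd z] -> Good x y z.
Proof.
move=> hx; elim/ltn_ind: y => y IH hy hz hodd.
case: (leqP y 6) => hy6.
  by apply: Lz => //; rewrite hy hy6.
have h1 : Good x (y - 4) z by apply: IH; lia.
have h2 : Good x 4 z by apply: Lz => //; lia.
case: h1 => s1 i1; case: h2 => s2 i2.
have := glue_y _ _ _ _ i1 i2; rewrite subnK; last by lia.
by apply; lia.
Qed.

Lemma good_all x y z : 2 <= x -> 3 <= y -> 4 <= z ->
  ~~ [&& odd x, odd y & odd z] -> Good x y z.
Proof.
elim/ltn_ind: x => x IH hx hy hz hodd.
case: (leqP x 3) => hx3.
  by apply: Ly => //; lia.
have h1 : Good (x - 2) y z by apply: IH; lia.
have h2 : Good 2 y z by apply: Ly => //; lia.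
case: h1 => s1 i1; case: h2 => s2 i2.
have := glue_x _ _ _ _ i1 i2; rewrite subnK; last by lia.
by apply; lia.
Qed.

Local Open Scope ring_scope.

Lemma at_index s u : uniq s -> u \in s ->
  at_ s (index u s) = u /\ at_ s (index u s).+1 = next s u.
Proof.
move=> U uin; have ilt : (index u s < size s)%N by rewrite index_mem.
split; first by rewrite /at_ modn_small // nth_index.
rewrite /at_ next_nth uin.
case: s U uin ilt => [//|y s'] U uin.
set i := index u (y :: s') => ilt.
case: (ltnP i (size s')) => hi.
  rewrite modn_small /=; last by rewrite ltnS.
  exact: set_nth_default.
have -> : i = size s' by apply/eqP; rewrite eqn_leq hi -ltnS ilt.
by rewrite /= modnn /= nth_default.
Qed.

Lemma T_closed m n p s : T (on_board m n p) s -> closed_tour m n p s.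
Proof.
case=> U M K; split => // i ilt.
have uin : nth vzero s i \in s by apply: mem_nth.
have [h1 h2] := at_index U uin.
rewrite index_uniq // in h1 h2.
by rewrite h1 h2; apply: K.
Qed.

Lemma pm2eP v : pm2eb v -> pm2e v.
Proof.
rewrite /pm2eb !inE.
case/orP => [/eqP->|]; first by exists ord0; left.
case/orP => [/eqP->|]; first by exists ord0; right.
case/orP => [/eqP->|]; first by exists (@Ordinal 3 1 isT); left.
case/orP => [/eqP->|]; first by exists (@Ordinal 3 1 isT); right.
case/orP => [/eqP->|/eqP->]; first by exists (@Ordinal 3 2 isT); left.
by exists (@Ordinal 3 2 isT); right.
Qed.

Lemma sites_bisited s sv : uniq s -> sitesok s sv -> bisited s.
Proof.
move=> U.
case: sv => [|u1 [|v1 [|u2 [|v2 [|u3 [|v3 [|u4 [|v4 [|]]]]]]]]] //=.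
case/and5P => /andP[i1 /eqP n1] /andP[i2 /eqP n2] /andP[i3 /eqP n3] /andP[i4 /eqP n4].
case/and3P => S1 S2 D0.
have /allP D : all (fun x => x \notin [:: u3; v3; u4; v4]) [:: u1; v1; u2; v2] by exact: D0.
have [a1 b1] := at_index U i1; have [a2 b2] := at_index U i2.
have [a3 b3] := at_index U i3; have [a4 b4] := at_index U i4.
have mk : forall w1 x1 w2 x2, w1 \in s -> w2 \in s -> next s w1 = x1 -> next s w2 = x2 ->
    siteb w1 x1 w2 x2 -> site s (index w1 s) (index w2 s).
  move=> w1 x1 w2 x2 j1 j2 m1 m2 sb.
  have [c1 d1] := at_index U j1; have [c2 d2] := at_index U j2.
  split; first by rewrite index_mem.
  split; first by rewrite index_mem.
  exists (vsub x1 w1).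
  rewrite c1 d1 c2 d2 m1 m2.
  case/andP: sb => kc sb; split => //.
  case/or4P: sb.
  - by case/and3P => /eqP e1 /eqP e2 /pm2eP e3; apply: Or41; split => //; rewrite vsubK.
  - by case/and3P => /eqP e1 /eqP e2 /pm2eP e3; apply: Or42; split => //; rewrite vsubK.
  - by case/andP => /eqP e1 /eqP e2; apply: Or43; split => //; rewrite vsubK.
  - by case/andP => /eqP e1 /eqP e2; apply: Or44; split => //; rewrite vsubK.
exists (index u1 s), (index u2 s), (index u3 s), (index u4 s); split; [|split].
- exact: (mk u1 v1 u2 v2).
- exact: (mk u3 v3 u4 v4).
- rewrite /site_support a1 b1 a2 b2 a3 b3 a4 b4 n1 n2 n3 n4.
  by move=> x xin; apply: D.
Qed.

Lemma km2 c : knight_move c ->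
  [|| absz (vx c) == 2, absz (vy c) == 2 | absz (vz c) == 2]%N.
Proof.
move=> H; have := perm_mem H 2%N; rewrite !inE /= => h.
by move: h; rewrite ![(2 == _)%N]eq_sym eqxx => ->.
Qed.

Lemma km_odd c : knight_move c ->
  (odd (absz (vx c)) + odd (absz (vy c)) + odd (absz (vz c)) = 1)%N.
Proof.
move=> H; have := permP H odd; rewrite /= => h.
by lia.
Qed.

Lemma tour_step m n p s i : (1 <= m)%N -> (1 <= n)%N -> (1 <= p)%N -> closed_tour m n p s ->
  [/\ knight_move (vsub (at_ s i.+1) (at_ s i)), on_board m n p (at_ s i)
    & on_board m n p (at_ s i.+1)].
Proof.
move=> hm hn hp [U M K].
have sz : (0 < size s)%N.
  have : on_board m n p (1, 1, 1) by rewrite /on_board /vx /vy /vz /=; split; lia.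
  by move/M; case: s {U M K}.
have onb : forall j, on_board m n p (at_ s j).
  by move=> j; apply/M; apply: mem_nth; rewrite ltn_pmod.
split => //.
have e1 : at_ s i = at_ s (i %% size s) by rewrite /at_ modn_mod.
have e2 : at_ s i.+1 = at_ s (i %% size s).+1 by rewrite /at_ -[((i %% size s).+1)%N]addn1 modnDml addn1.
by rewrite e1 e2; apply: K; rewrite ltn_pmod.
Qed.

Lemma size_board m n p s : closed_tour m n p s -> size s = (m * n * p)%N.
Proof.
case=> U M _.
have Uz : forall k, uniq (zs k).
  by move=> k; rewrite map_inj_uniq ?iota_uniq // => a b [].
have Ub : uniq (board_seq m n p).
  apply: allpairs_uniq => //; first by apply: allpairs_uniq => // -[a b] [c d].
  by move=> [a b] [c d].
have P : perm_eq s (board_seq m n p).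
  apply: uniq_perm => // x; apply/idP/idP => h.
    by apply/mem_board; apply/M.
  by apply/M; apply/mem_board.
by rewrite (perm_size P) !size_allpairs !size_map !size_iota.
Qed.

Definition ssum (v : vec) : int := vx v + vy v + vz v.

Lemma nec_parity m n p s : (1 <= m)%N -> (1 <= n)%N -> (1 <= p)%N ->
  closed_tour m n p s -> ~~ [&& odd m, odd n & odd p].
Proof.
move=> hm hn hp C.
have step : forall i, ((ssum (at_ s i.+1) - ssum (at_ s i)) %% 2)%Z = 1.
  move=> i; have [K _ _] := tour_step i hm hn hp C.
  move: (km_odd K); rewrite /ssum.
  case: (at_ s i.+1) => [[a b] c]; case: (at_ s i) => [[d e] f].
  rewrite /vsub /vx /vy /vz /= => h; lia.
have ind : forall i, ((ssum (at_ s i) - ssum (at_ s 0) - (i%:Z)) %% 2)%Z = 0.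
  elim => [|i IH]; first by lia.
  by move: (step i); lia.
have := ind (size s).
have -> : at_ s (size s) = at_ s 0 by rewrite /at_ modnn mod0n.
rewrite (size_board C) => h.
apply/negP => /and3P[o1 o2 o3].
have : odd (m * n * p) by rewrite !oddM o1 o2 o3.
lia.
Qed.

Lemma nec_n m n p s : (2 <= m)%N -> (m <= n)%N -> (n <= p)%N ->
  closed_tour m n p s -> (3 <= n)%N.
Proof.
move=> hm hmn hnp C; case: (leqP 3 n) => // hn.
have hm1 : (1 <= m)%N by lia.
have hn1 : (1 <= n)%N by lia.
have hp1 : (1 <= p)%N by lia.
have step : forall i, ((vz (at_ s i.+1) - vz (at_ s i)) %% 2)%Z = 0.
  move=> i; have [K B1 B2] := tour_step i hm1 hn1 hp1 C.
  move: (km2 K) B1 B2.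
  case: (at_ s i.+1) => [[a b] c]; case: (at_ s i) => [[d e] f].
  rewrite /on_board /vsub /vx /vy /vz /= => h [? ? ?] [? ? ?]; lia.
have ind : forall i, ((vz (at_ s i) - vz (at_ s 0)) %% 2)%Z = 0.
  elim => [|i IH]; first by lia.
  by move: (step i); lia.
case: C => U M K.
have i1 : ((1, 1, 1) : vec) \in s by apply/M; rewrite /on_board /vx /vy /vz /=; split; lia.
have i2 : ((1, 1, 2) : vec) \in s by apply/M; rewrite /on_board /vx /vy /vz /=; split; lia.
have [a1 _] := at_index U i1; have [a2 _] := at_index U i2.
move: (ind (index (1, 1, 1) s)) (ind (index (1, 1, 2) s)); rewrite a1 a2 /vz /=.
lia.
Qed.

Lemma nec_p m n p s : (2 <= m)%N -> (m <= n)%N -> (n <= p)%N -> (3 <= n)%N ->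
  closed_tour m n p s -> (4 <= p)%N.
Proof.
move=> hm hmn hnp hn C; case: (leqP 4 p) => // hp.
have hm1 : (1 <= m)%N by lia.
have hn1 : (1 <= n)%N by lia.
have hp1 : (1 <= p)%N by lia.
case: (C) => U M K.
have i1 : ((2, 2, 2) : vec) \in s by apply/M; rewrite /on_board /vx /vy /vz /=; split; lia.
have [a1 _] := at_index U i1.
have [Kn _ B2] := tour_step (index (2, 2, 2) s) hm1 hn1 hp1 C.
move: (km2 Kn) B2; rewrite a1.
case: (at_ s (index (2, 2, 2) s).+1) => [[a b] c].
rewrite /on_board /vsub /vx /vy /vz /= => h [? ? ?]; lia.
Qed.

Local Close Scope ring_scope.

Theorem theorem4p4 (m n p : nat) :
  (2 <= m)%N -> (m <= n)%N -> (n <= p)%N ->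
  ((exists s : seq vec, closed_tour m n p s /\ bisited s) <->
   [/\ ~~ odd m || ~~ odd n || ~~ odd p, (3 <= n)%N & (4 <= p)%N]).
Proof.
move=> hm hmn hnp; split.
- move=> [s [C _]].
  have hn := nec_n hm hmn hnp C.
  split => //; last exact: (nec_p hm hmn hnp hn C).
  have := @nec_parity m n p s; rewrite !negb_and -!orbA; apply => //; lia.
- move=> [hodd hn hp].
  have [s [Ts _ _ _ _ _ _ [sv /andP[ok _]]]] : Good m n p.
    by apply: good_all => //; lia.
  exists s; split; first exact: T_closed.
  by apply: sites_bisited ok; case: Ts.
Qed.
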